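(* Let $\mathcal A$ be the attraction basin of $x_0$ for the auxiliary flow $\Phi$. Then $\mathcal A$ is open, and: (i) the restriction $f|_{\mathcal A}$ is injective; (ii) $f(\mathcal A)$ is star-shaped with respect to $y_0=f(x_0)$; (iii) $\mathcal A$ is maximal with these properties: every open connected set $C\subseteq D$ containing $x_0$ such that $f|_C$ is injective and $f(C)$ is star-shaped with respect to $y_0$ satisfies $C\subseteq\mathcal A$.
   Context: Standing setting: $X,Y$ are real Banach spaces, $D\subseteq X$ is a nonempty open connected set, $f:D\to Y$ is a local homeomorphism (every point has an open neighbourhood mapped homeomorphically onto an open set), $x_0\in D$, $y_0=f(x_0)$. A flow in $D$ is a map $\Phi:D_\Phi\to D$ such that: (i) $D_\Phi$ is an open subset of $D\times\mathbb R$ and $\Phi$ is continuous; (ii) for each $x\in D$, $\{t:(x,t)\in D_\Phi\}$ is an interval containing $0$; (iii) $\Phi(x,0)=x$; (iv) if $(x,t_1),(x,t_1+t_2)\in D_\Phi$ then $(\Phi(x,t_1),t_2)\in D_\Phi$ and $\Phi(\Phi(x,t_1),t_2)=\Phi(x,t_1+t_2)$. The trajectory through $x$ is global in the future if $\{x\}\times[0,+\infty)\subseteq D_\Phi$. Let $\Psi(y,t)=y_0+e^{-t}(y-y_0)$ for $y\in Y,t\in\mathbb R$. The auxiliary flow $\Phi$ is the unique flow in $D$ of maximal domain with $f(\Phi(x,t))=\Psi(f(x),t)$ for all $(x,t)\in D_\Phi$; for each $x$, $t\mapsto\Phi(x,t)$ is the maximal continuous lifting by $f$ of $t\mapsto\Psi(f(x),t)$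 through $x$ at $t=0$. The attraction basin $\mathcal A$ of $x_0$ is the set of $x\in D$ whose trajectory is global in the future and satisfies $\Phi(x,t)\to x_0$ as $t\to+\infty$. *)

(* Defs.v *)
From Stdlib Require Import Reals Lra.
Open Scope R_scope.

Record Banach : Type := {
  car :> Type;
  vzero : car;
  vadd : car -> car -> car;
  vopp : car -> car;
  vscal : R -> car -> car;
  vnorm : car -> R;
  vadd_assoc : forall x y z, vadd x (vadd y z) = vadd (vadd x y) z;
  vadd_comm : forall x y, vadd x y = vadd y x;
  vadd_0 : forall x, vadd x vzero = x;
  vadd_opp : forall x, vadd x (vopp x) = vzero;
  vscal_1 : forall x, vscal 1 x = x;
  vscal_assoc : forall a b x, vscal a (vscal b x) = vscal (a * b) x;
  vscal_distr_v : forall a x y, vscal a (vadd x y) = vadd (vscal a x) (vscal a y);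
  vscal_distr_s : forall a b x, vscal (a + b) x = vadd (vscal a x) (vscal b x);
  vnorm_eq0 : forall x, vnorm x = 0 -> x = vzero;
  vnorm_triangle : forall x y, vnorm (vadd x y) <= vnorm x + vnorm y;
  vnorm_scal : forall a x, vnorm (vscal a x) = Rabs a * vnorm x;
  complete : forall u : nat -> car,
    (forall eps, 0 < eps -> exists N, forall n m, (N <= n)%nat -> (N <= m)%nat ->
        vnorm (vadd (u n) (vopp (u m))) < eps) ->
    exists l, forall eps, 0 < eps -> exists N, forall n, (N <= n)%nat ->
        vnorm (vadd (u n) (vopp l)) < eps
}.

Arguments vzero {b} : rename.
Arguments vadd {b} : rename.
Arguments vopp {b} : rename.
Arguments vscal {b} : rename.
Arguments vnorm {b} : rename.

Definition vsub {X : Banach} (x y : X) : X := vadd x (vopp y).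

Definition is_open {X : Banach} (U : X -> Prop) : Prop :=
  forall x, U x -> exists r, 0 < r /\ forall y, vnorm (vsub y x) < r -> U y.

Definition is_connected {X : Banach} (S : X -> Prop) : Prop :=
  forall U V : X -> Prop, is_open U -> is_open V ->
    (forall x, S x -> U x \/ V x) ->
    (exists x, S x /\ U x) -> (exists x, S x /\ V x) ->
    exists x, S x /\ U x /\ V x.

Definition image {X Y : Banach} (f : X -> Y) (U : X -> Prop) : Y -> Prop :=
  fun y => exists u, U u /\ f u = y.

Definition injective_on {X Y : Banach} (f : X -> Y) (U : X -> Prop) : Prop :=
  forall u v, U u -> U v -> f u = f v -> u = v.

Definition continuous_on {X Y : Banach} (g : X -> Y) (S : X -> Prop) : Prop :=
  forall x, S x -> forall eps, 0 < eps -> exists delta, 0 < delta /\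
    forall y, S y -> vnorm (vsub y x) < delta -> vnorm (vsub (g y) (g x)) < eps.

Definition local_homeo {X Y : Banach} (D : X -> Prop) (f : X -> Y) : Prop :=
  forall x, D x -> exists U : X -> Prop,
    is_open U /\ U x /\ (forall u, U u -> D u) /\
    is_open (image f U) /\ injective_on f U /\ continuous_on f U /\
    exists g : Y -> X, (forall u, U u -> g (f u) = u) /\ continuous_on g (image f U).

Definition is_flow {X : Banach} (D : X -> Prop) (Dom : X -> R -> Prop)
    (Phi : X -> R -> X) : Prop :=
  (forall x t, Dom x t -> D x) /\
  (forall x t, Dom x t -> exists r, 0 < r /\
      forall y s, vnorm (vsub y x) < r -> Rabs (s - t) < r -> Dom y s) /\
  (forall x t, Dom x t -> D (Phi x t)) /\
  (forall x t, Dom x t -> forall eps, 0 < eps -> exists delta, 0 < delta /\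
      forall y s, Dom y s -> vnorm (vsub y x) < delta -> Rabs (s - t) < delta ->
        vnorm (vsub (Phi y s) (Phi x t)) < eps) /\
  (forall x, D x -> Dom x 0) /\
  (forall x a b c, Dom x a -> Dom x c -> a <= b <= c -> Dom x b) /\
  (forall x, D x -> Phi x 0 = x) /\
  (forall x t1 t2, Dom x t1 -> Dom x (t1 + t2) ->
      Dom (Phi x t1) t2 /\ Phi (Phi x t1) t2 = Phi x (t1 + t2)).

Definition Psi {Y : Banach} (y0 : Y) (y : Y) (t : R) : Y :=
  vadd y0 (vscal (exp (- t)) (vsub y y0)).

Definition is_interval0 (J : R -> Prop) : Prop :=
  J 0 /\ forall a b c, J a -> J c -> a <= b <= c -> J b.

Definition is_lifting {X Y : Banach} (D : X -> Prop) (f : X -> Y) (y0 : Y)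
    (x : X) (J : R -> Prop) (gamma : R -> X) : Prop :=
  is_interval0 J /\ gamma 0 = x /\
  (forall t, J t -> D (gamma t)) /\
  (forall t, J t -> f (gamma t) = Psi y0 (f x) t) /\
  (forall t, J t -> forall eps, 0 < eps -> exists delta, 0 < delta /\
      forall s, J s -> Rabs (s - t) < delta -> vnorm (vsub (gamma s) (gamma t)) < eps).

Definition is_aux_flow {X Y : Banach} (D : X -> Prop) (f : X -> Y) (y0 : Y)
    (Dom : X -> R -> Prop) (Phi : X -> R -> X) : Prop :=
  is_flow D Dom Phi /\
  (forall x t, Dom x t -> f (Phi x t) = Psi y0 (f x) t) /\
  (forall x, D x -> is_lifting D f y0 x (Dom x) (Phi x)) /\
  (forall x J gamma, D x -> is_lifting D f y0 x J gamma ->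
      forall t, J t -> Dom x t /\ gamma t = Phi x t).

Definition attraction_basin {X : Banach} (D : X -> Prop) (Dom : X -> R -> Prop)
    (Phi : X -> R -> X) (x0 : X) : X -> Prop :=
  fun x => D x /\ (forall t, 0 <= t -> Dom x t) /\
    (forall eps, 0 < eps -> exists T, forall t, T <= t ->
        vnorm (vsub (Phi x t) x0) < eps).

Definition star_shaped {Y : Banach} (S : Y -> Prop) (y0 : Y) : Prop :=
  forall y, S y -> forall l, 0 <= l <= 1 -> S (vadd y0 (vscal l (vsub y y0))).

(* Main.v *)
Require Import Defs.
From Stdlib Require Import Reals Lra ClassicalEpsilon.
Open Scope R_scope.

Section V.
Variable X : Banach.

Lemma vadd0l (x : X) : vadd vzero x = x.
Proof. rewrite (vadd_comm X); apply vadd_0. Qed.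

Lemma vscal0 (x : X) : vscal 0 x = vzero.
Proof.
  assert (H : vscal 0 x = vadd (vscal 0 x) (vscal 0 x)).
  { rewrite <- (vscal_distr_s X). replace (0+0) with 0 by ring. reflexivity. }
  transitivity (vadd (vadd (vscal 0 x) (vscal 0 x)) (vopp (vscal 0 x))).
  - rewrite <- (vadd_assoc X), (vadd_opp X), (vadd_0 X). reflexivity.
  - rewrite <- H. apply vadd_opp.
Qed.

Lemma vopp_scal (x : X) : vopp x = vscal (-1) x.
Proof.
  symmetry.
  transitivity (vadd (vadd (vscal (-1) x) x) (vopp x)).
  - rewrite <- (vadd_assoc X), (vadd_opp X), (vadd_0 X). reflexivity.
  - assert (E : vadd (vscal (-1) x) x = vzero).
    { rewrite <- (vscal_1 X x) at 2. rewrite <- (vscal_distr_s X).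
      replace (-1+1) with 0 by ring. apply vscal0. }
    rewrite E. apply vadd0l.
Qed.

Lemma vscal_zero a : vscal a (@vzero X) = vzero.
Proof.
  rewrite <- (vscal0 vzero). rewrite (vscal_assoc X), Rmult_0_r. reflexivity.
Qed.

Lemma vnorm0 : vnorm (@vzero X) = 0.
Proof. rewrite <- (vscal0 vzero), (vnorm_scal X), Rabs_R0; ring. Qed.

Lemma vnorm_opp (x : X) : vnorm (vopp x) = vnorm x.
Proof. rewrite vopp_scal, (vnorm_scal X), Rabs_left by lra; ring. Qed.

Lemma vnorm_ge0 (x : X) : 0 <= vnorm x.
Proof.
  pose proof (vnorm_triangle X x (vopp x)) as H.
  rewrite (vadd_opp X), vnorm0, vnorm_opp in H; lra.
Qed.

Lemma vnorm_sub_diag (x : X) : vnorm (vsub x x) = 0.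
Proof. unfold vsub; rewrite (vadd_opp X); apply vnorm0. Qed.

Lemma vsub_tri (a b c : X) : vnorm (vsub a c) <= vnorm (vsub a b) + vnorm (vsub b c).
Proof.
  replace (vsub a c) with (vadd (vsub a b) (vsub b c)); [apply vnorm_triangle|].
  unfold vsub. rewrite <- (vadd_assoc X), (vadd_assoc X (vopp b) b (vopp c)),
    (vadd_comm X (vopp b) b), (vadd_opp X), vadd0l. reflexivity.
Qed.

Lemma vsub_add_l (y0 v : X) : vsub (vadd y0 v) y0 = v.
Proof. unfold vsub; rewrite (vadd_comm X y0 v), <- (vadd_assoc X), (vadd_opp X), (vadd_0 X). reflexivity. Qed.

Lemma vopp_add (p q : X) : vopp (vadd p q) = vadd (vopp p) (vopp q).
Proof. rewrite !vopp_scal; apply vscal_distr_v. Qed.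

Lemma vopp_vscal b (u : X) : vopp (vscal b u) = vscal (-b) u.
Proof. rewrite vopp_scal, (vscal_assoc X). f_equal; ring. Qed.

Lemma vadd_4 (a b c d : X) : vadd (vadd a b) (vadd c d) = vadd (vadd a c) (vadd b d).
Proof.
  rewrite <- (vadd_assoc X a b), (vadd_assoc X b c d), (vadd_comm X b c),
    <- (vadd_assoc X c b d), (vadd_assoc X). reflexivity.
Qed.

Lemma vsub_scal2 (p u : X) a b :
  vsub (vadd p (vscal a u)) (vadd p (vscal b u)) = vscal (a - b) u.
Proof.
  unfold vsub. rewrite vopp_add, vopp_vscal, vadd_4, (vadd_opp X), vadd0l,
    <- (vscal_distr_s X). f_equal; ring.
Qed.

Lemma Psi0 (y0 y : X) : Psi y0 y 0 = y.
Proof.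
  unfold Psi. rewrite Ropp_0, exp_0, (vscal_1 X). unfold vsub.
  rewrite (vadd_comm X y (vopp y0)), (vadd_assoc X), (vadd_opp X), vadd0l. reflexivity.
Qed.

Lemma Psi_y0 (y0 y : X) t : vnorm (vsub (Psi y0 y t) y0) = exp (- t) * vnorm (vsub y y0).
Proof.
  unfold Psi. rewrite vsub_add_l, (vnorm_scal X), Rabs_right; [reflexivity|].
  left; apply exp_pos.
Qed.

Lemma Psi_st (y0 y : X) s t :
  vnorm (vsub (Psi y0 y s) (Psi y0 y t)) = Rabs (exp (-s) - exp (-t)) * vnorm (vsub y y0).
Proof. unfold Psi. rewrite vsub_scal2, (vnorm_scal X). reflexivity. Qed.

End V.

Lemma exp_cont t eps : 0 < eps -> exists d, 0 < d /\
  forall s, Rabs (s - t) < d -> Rabs (exp (-s) - exp (-t)) < eps.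
Proof.
  intro Heps.
  pose proof (derivable_continuous_pt exp (-t) (derivable_exp (-t))) as H.
  destruct (H eps Heps) as (a & Ha & Hb). exists a. split; [lra|]. intros s Hs.
  destruct (Req_dec s t) as [->|Hne].
  - rewrite Rminus_diag, Rabs_R0; lra.
  - apply (Hb (-s)). split.
    + unfold D_x, no_cond. split; [exact I|]. intro; apply Hne; lra.
    + simpl. unfold R_dist. replace (-s - -t) with (-(s-t)) by ring.
      rewrite Rabs_Ropp; exact Hs.
Qed.

Lemma exp_small eps : 0 < eps -> exists T, forall t, T <= t -> exp (-t) < eps.
Proof.
  intro Heps. exists (- ln eps + 1). intros t Ht.
  rewrite <- (exp_ln eps Heps). apply exp_increasing. lra.
Qed.

Lemma exp_le1 t : 0 <= t -> exp (-t) <= 1.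
Proof.
  intro Ht. rewrite <- exp_0. destruct (Req_dec t 0) as [->|].
  - rewrite Ropp_0; lra.
  - left; apply exp_increasing; lra.
Qed.

Lemma small_mul a N eta : 0 <= N -> 0 < eta -> Rabs a < eta / (N + 1) -> Rabs a * N < eta.
Proof.
  intros HN He H.
  apply (Rmult_lt_compat_r (N+1)) in H; [|lra]. unfold Rdiv in H.
  rewrite Rmult_assoc, Rinv_l in H; [|lra].
  pose proof (Rabs_pos a). nra.
Qed.

Section Main.
Variables (X Y : Banach) (D : X -> Prop) (f : X -> Y) (x0 : X)
    (Dom : X -> R -> Prop) (Phi : X -> R -> X).
Hypothesis Hlh : local_homeo D f.
Hypothesis Haux : is_aux_flow D f (f x0) Dom Phi.
Hypothesis HD0 : D x0.

Lemma local_inv (C : X -> Prop) c : is_open C -> C c -> D c ->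
  exists delta (g : Y -> X) r, 0 < delta /\ 0 < r /\ g (f c) = c /\
  (forall w, vnorm (vsub w (f c)) < delta -> C (g w) /\ D (g w) /\ f (g w) = w /\
    forall eps, 0 < eps -> exists eta, 0 < eta /\ forall w',
      vnorm (vsub w' (f c)) < delta -> vnorm (vsub w' w) < eta ->
      vnorm (vsub (g w') (g w)) < eps) /\
  (forall z, vnorm (vsub z c) < r -> vnorm (vsub (f z) (f c)) < delta /\ g (f z) = z).
Proof.
  intros HCo Hc HDc.
  destruct (Hlh c HDc) as (U & HUo & HUc & HUD & Hio & Hinj & Hfc & g & Hgf & Hgc).
  assert (Himc : image f U (f c)) by (exists c; split; auto).
  destruct (Hio (f c) Himc) as (r1 & Hr1 & Hb1).
  destruct (HCo c Hc) as (r2 & Hr2 & Hb2).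
  destruct (Hgc (f c) Himc r2 Hr2) as (d1 & Hd1 & Hg1).
  assert (Hdp : 0 < Rmin r1 d1) by (apply Rmin_glb_lt; auto).
  destruct (HUo c HUc) as (r3 & Hr3 & Hb3).
  destruct (Hfc c HUc (Rmin r1 d1) Hdp) as (d2 & Hd2 & Hf2).
  exists (Rmin r1 d1), g, (Rmin r3 d2).
  split; [exact Hdp|]. split; [apply Rmin_glb_lt; auto|]. split; [auto|]. split.
  - intros w Hw.
    assert (Hw1 : image f U w) by (apply Hb1; pose proof (Rmin_l r1 d1); lra).
    destruct Hw1 as (u & Hu & Hfu). subst w.
    rewrite (Hgf u Hu). split; [|split; [auto|split; [auto|]]].
    + apply Hb2. rewrite <- (Hgf u Hu), <- (Hgf c HUc) at 1.
      apply Hg1; [exists u; auto|]. pose proof (Rmin_r r1 d1); lra.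
    + intros eps Heps. destruct (Hgc (f u) (ex_intro _ u (conj Hu eq_refl)) eps Heps)
        as (eta & Heta & Hc2).
      exists eta. split; auto. intros w' Hw' Hd. rewrite <- (Hgf u Hu) at 1.
      apply Hc2; auto. apply Hb1. pose proof (Rmin_l r1 d1); lra.
  - intros z Hz.
    assert (HUz : U z) by (apply Hb3; pose proof (Rmin_l r3 d2); lra).
    split; [apply Hf2; auto; pose proof (Rmin_r r3 d2); lra|]. auto.
Qed.

Let A := attraction_basin D Dom Phi x0.

Lemma ball_in_A delta (g : Y -> X) : 0 < delta -> g (f x0) = x0 ->
  (forall w, vnorm (vsub w (f x0)) < delta -> D (g w) /\ f (g w) = w /\
    forall eps, 0 < eps -> exists eta, 0 < eta /\ forall w',
      vnorm (vsub w' (f x0)) < delta -> vnorm (vsub w' w) < eta ->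
      vnorm (vsub (g w') (g w)) < eps) ->
  forall z, D z -> vnorm (vsub (f z) (f x0)) < delta -> g (f z) = z -> A z.
Proof.
  intros Hdel Hg0 Hg z HDz Hz Hgz.
  destruct Haux as (Hflow & Hfl & Hlift & Hmax).
  set (N := vnorm (vsub (f z) (f x0))).
  assert (HN : 0 <= N) by apply vnorm_ge0.
  assert (HzN : N < delta) by exact Hz.
  assert (Hin : forall t, 0 <= t -> vnorm (vsub (Psi (f x0) (f z) t) (f x0)) < delta).
  { intros t Ht. rewrite Psi_y0. pose proof (exp_le1 t Ht). pose proof (exp_pos (-t)).
    fold N. nra. }
  set (gamma := fun t => g (Psi (f x0) (f z) t)).
  assert (Hl : is_lifting D f (f x0) z (fun t => 0 <= t) gamma).
  { split; [split; [lra| intros; lra]|]. split.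
    { unfold gamma. rewrite Psi0. auto. }
    split; [intros t Ht; apply (Hg _ (Hin t Ht))|].
    split; [intros t Ht; apply (Hg _ (Hin t Ht))|].
    intros t Ht eps Heps.
    destruct (Hg _ (Hin t Ht)) as (_ & _ & Hc).
    destruct (Hc eps Heps) as (eta & Heta & Hc2).
    assert (He : 0 < eta / (N + 1)) by (apply Rdiv_lt_0_compat; lra).
    destruct (exp_cont t _ He) as (d & Hd & Hed).
    exists d. split; auto. intros s Hs Hst. unfold gamma. apply Hc2; auto.
    rewrite Psi_st. fold N. apply small_mul; auto. }
  split; [auto|]. split.
  - intros t Ht. apply (Hmax z _ gamma HDz Hl t Ht).
  - intros eps Heps.
    assert (H0 : vnorm (vsub (f x0) (f x0)) < delta) by (rewrite vnorm_sub_diag; auto).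
    destruct (Hg _ H0) as (_ & _ & Hc).
    destruct (Hc eps Heps) as (eta & Heta & Hc2).
    assert (He : 0 < eta / (N + 1)) by (apply Rdiv_lt_0_compat; lra).
    destruct (exp_small _ He) as (T & HT).
    exists (Rmax T 0). intros t Ht.
    pose proof (Rmax_l T 0). pose proof (Rmax_r T 0).
    destruct (Hmax z _ gamma HDz Hl t ltac:(lra)) as (_ & <-).
    unfold gamma. rewrite <- Hg0 at 2. apply Hc2; [apply Hin; lra|].
    rewrite Psi_y0. fold N. pose proof (exp_pos (-t)).
    rewrite <- (Rabs_right (exp (-t))) by lra. apply small_mul; auto.
    rewrite Rabs_right by lra. apply HT; lra.
Qed.

Hypothesis HDo : is_open D.

Lemma x0_in_A : A x0.
Proof.
  destruct Haux as (Hflow & Hfl & Hlift & Hmax).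
  assert (Hl : is_lifting D f (f x0) x0 (fun _ => True) (fun _ => x0)).
  { split; [split; auto|]. split; auto. split; auto. split.
    - intros t _. unfold Psi, vsub. rewrite (vadd_opp Y), (vscal_zero Y), (vadd_0 Y). reflexivity.
    - intros t _ eps Heps. exists 1. split; [lra|]. intros. rewrite vnorm_sub_diag; auto. }
  split; auto. split.
  - intros t _. apply (Hmax x0 _ _ HD0 Hl t I).
  - intros eps Heps. exists 0. intros t _.
    destruct (Hmax x0 _ _ HD0 Hl t I) as (_ & <-). rewrite vnorm_sub_diag; auto.
Qed.

Lemma A_inj : injective_on f A.
Proof.
  destruct Haux as (Hflow & Hfl & Hlift & Hmax).
  destruct Hflow as (F1 & F2 & F3 & F4 & F5 & F6 & F7 & F8).
  intros x1 x2 (HD1 & Hd1 & Hc1) (HD2 & Hd2 & Hc2) Hf.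
  destruct (Hlh x0 HD0) as (U & HUo & HUc & _ & _ & Hinj & _).
  destruct (HUo x0 HUc) as (r & Hr & Hb).
  destruct (Hc1 r Hr) as (T1 & HT1). destruct (Hc2 r Hr) as (T2 & HT2).
  set (T := Rmax (Rmax T1 T2) 0).
  assert (H1 : T1 <= T) by (pose proof (Rmax_l T1 T2); pose proof (Rmax_l (Rmax T1 T2) 0); unfold T; lra).
  assert (H2 : T2 <= T) by (pose proof (Rmax_r T1 T2); pose proof (Rmax_l (Rmax T1 T2) 0); unfold T; lra).
  assert (H0 : 0 <= T) by (apply Rmax_r).
  assert (EqT : Phi x1 T = Phi x2 T).
  { apply Hinj; [apply Hb, HT1; auto | apply Hb, HT2; auto |].
    rewrite (Hfl x1 T (Hd1 T H0)), (Hfl x2 T (Hd2 T H0)), Hf. reflexivity. }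
  assert (E : forall x, D x -> Dom x T -> Phi (Phi x T) (-T) = x).
  { intros x HDx HdT.
    assert (Hz : Dom x (T + -T)) by (replace (T + -T) with 0 by ring; apply F5; auto).
    destruct (F8 x T (-T) HdT Hz) as (_ & ->).
    replace (T + -T) with 0 by ring. apply F7; auto. }
  rewrite <- (E x1 HD1 (Hd1 T H0)), <- (E x2 HD2 (Hd2 T H0)), EqT. reflexivity.
Qed.

Lemma A_star : star_shaped (image f A) (f x0).
Proof.
  destruct Haux as (Hflow & Hfl & Hlift & Hmax).
  destruct Hflow as (F1 & F2 & F3 & F4 & F5 & F6 & F7 & F8).
  intros y (x & HA & <-) l Hl.
  destruct (Req_dec l 0) as [->|Hl0].
  - exists x0. split; [apply x0_in_A|]. rewrite (vscal0 Y), (vadd_0 Y). reflexivity.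
  - assert (Hlp : 0 < l) by lra.
    set (s := - ln l).
    assert (Hs : 0 <= s).
    { unfold s. destruct (Rle_dec (ln l) 0); [lra|].
      exfalso. assert (exp 0 < exp (ln l)) by (apply exp_increasing; lra).
      rewrite exp_0, exp_ln in H; lra. }
    destruct HA as (HDx & Hd & Hc).
    exists (Phi x s). split.
    + split; [apply F3, Hd; auto|]. split.
      * intros t Ht. apply (F8 x s t (Hd s Hs) (Hd (s + t) ltac:(lra))).
      * intros eps Heps. destruct (Hc eps Heps) as (T & HT).
        exists (Rmax T 0). intros t Ht. pose proof (Rmax_l T 0). pose proof (Rmax_r T 0).
        destruct (F8 x s t (Hd s Hs) (Hd (s + t) ltac:(lra))) as (_ & ->).
        apply HT; lra.
    + rewrite (Hfl x s (Hd s Hs)). unfold Psi, s.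
      replace (- - ln l) with (ln l) by ring. rewrite exp_ln; auto.
Qed.

Lemma A_open : is_open A.
Proof.
  intros x HA. pose proof Haux as (Hflow & Hfl & Hlift & Hmax).
  destruct Hflow as (F1 & F2 & F3 & F4 & F5 & F6 & F7 & F8).
  destruct HA as (HDx & Hdx & Hcx).
  destruct (local_inv D x0 HDo HD0 HD0) as (delta & g & r & Hdel & Hr & Hg0 & Hg & Hball).
  destruct (HDo x0 HD0) as (rD & HrD & HbD).
  set (r' := Rmin r rD).
  assert (Hr' : 0 < r') by (apply Rmin_glb_lt; auto).
  assert (Hnb : forall z, vnorm (vsub z x0) < r' -> A z).
  { intros z Hz. pose proof (Rmin_l r rD). pose proof (Rmin_r r rD).
    destruct (Hball z ltac:(unfold r' in *; lra)) as (Hz1 & Hz2).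
    apply (ball_in_A delta g); auto.
    - intros w Hw. destruct (Hg w Hw) as (_ & ? & ? & ?); auto.
    - apply HbD. unfold r' in *; lra. }
  destruct (Hcx (r'/2) ltac:(lra)) as (T0 & HT0).
  set (T := Rmax T0 0).
  assert (HT : 0 <= T) by apply Rmax_r.
  assert (HT0' : T0 <= T) by apply Rmax_l.
  assert (HdT : Dom x T) by (apply Hdx; auto).
  destruct (F2 x T HdT) as (rho1 & Hrho1 & Hb1).
  destruct (F4 x T HdT (r'/2) ltac:(lra)) as (rho2 & Hrho2 & Hb2).
  exists (Rmin rho1 rho2). split; [apply Rmin_glb_lt; auto|].
  intros y Hy. pose proof (Rmin_l rho1 rho2). pose proof (Rmin_r rho1 rho2).
  assert (Hzero : Rabs (T - T) = 0) by (rewrite Rminus_diag; apply Rabs_R0).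
  assert (HdyT : Dom y T) by (apply Hb1; lra).
  assert (HDy : D y) by (apply (F1 y T); auto).
  set (z := Phi y T).
  assert (HAz : A z).
  { apply Hnb. pose proof (vsub_tri X z (Phi x T) x0).
    assert (vnorm (vsub z (Phi x T)) < r'/2) by (apply Hb2; auto; lra).
    assert (vnorm (vsub (Phi x T) x0) < r'/2) by (apply HT0; auto). lra. }
  destruct HAz as (HDz & Hdz & Hcz).
  assert (Ez : Dom z (-T) /\ Phi z (-T) = y).
  { assert (Hz : Dom y (T + -T)) by (replace (T + -T) with 0 by ring; apply F5; auto).
    destruct (F8 y T (-T) HdyT Hz) as (H1 & H2). split; [exact H1|]. unfold z; rewrite H2.
    replace (T + -T) with 0 by ring. apply F7; auto. }
  destruct Ez as (Ez1 & Ez2).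
  assert (Hkey : forall s, 0 <= s -> Dom y (T + s) /\ Phi y (T + s) = Phi z s).
  { intros s Hs.
    assert (Hz : Dom z (-T + (T + s))) by (replace (-T + (T + s)) with s by ring; apply Hdz; auto).
    destruct (F8 z (-T) (T + s) Ez1 Hz) as (H1 & H2). rewrite Ez2 in H1, H2.
    split; auto. rewrite H2. f_equal; ring. }
  split; auto. split.
  - intros t Ht. destruct (Rle_dec t T).
    + apply (F6 y 0 t T); [apply F5; auto | auto | lra].
    + replace t with (T + (t - T)) by ring. apply Hkey; lra.
  - intros eps Heps. destruct (Hcz eps Heps) as (T' & HT').
    exists (T + Rmax T' 0). intros t Ht. pose proof (Rmax_l T' 0). pose proof (Rmax_r T' 0).
    replace t with (T + (t - T)) by ring. rewrite (proj2 (Hkey (t - T) ltac:(lra))).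
    apply HT'; lra.
Qed.

Lemma A_max (C : X -> Prop) : is_open C -> (forall x, C x -> D x) -> C x0 ->
  injective_on f C -> star_shaped (image f C) (f x0) -> forall x, C x -> A x.
Proof.
  intros HCo HCD HC0 HCi HCs x Hx.
  destruct Haux as (Hflow & Hfl & Hlift & Hmax).
  set (N := vnorm (vsub (f x) (f x0))).
  assert (HN : 0 <= N) by apply vnorm_ge0.
  assert (Hex : forall t, 0 <= t -> exists u, C u /\ f u = Psi (f x0) (f x) t).
  { intros t Ht.
    destruct (HCs (f x) (ex_intro _ x (conj Hx eq_refl)) (exp (-t))) as (u & Hu & Hfu).
    { split; [left; apply exp_pos | apply exp_le1; auto]. }
    exists u; split; auto. }
  set (gamma := fun t => epsilon (inhabits x) (fun u => C u /\ f u = Psi (f x0) (f x) t)).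
  assert (Hgam : forall t, 0 <= t -> C (gamma t) /\ f (gamma t) = Psi (f x0) (f x) t).
  { intros t Ht. exact (epsilon_spec _ _ (Hex t Ht)). }
  assert (Huniq : forall t u, 0 <= t -> C u -> f u = Psi (f x0) (f x) t -> gamma t = u).
  { intros t u Ht Hu Hfu. destruct (Hgam t Ht) as (H1 & H2).
    apply HCi; auto. rewrite H2, Hfu; reflexivity. }
  assert (Hl : is_lifting D f (f x0) x (fun t => 0 <= t) gamma).
  { split; [split; [lra| intros; lra]|]. split.
    { apply Huniq; [lra | auto | rewrite Psi0; reflexivity]. }
    split; [intros t Ht; apply HCD, (Hgam t Ht)|].
    split; [intros t Ht; apply (Hgam t Ht)|].
    intros t Ht eps Heps.
    destruct (Hgam t Ht) as (Hc & Hfc).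
    destruct (local_inv C (gamma t) HCo Hc (HCD _ Hc)) as (delta & g & r & Hdel & Hr & Hgc & Hg & _).
    assert (H0 : vnorm (vsub (f (gamma t)) (f (gamma t))) < delta) by (rewrite vnorm_sub_diag; auto).
    destruct (Hg _ H0) as (_ & _ & _ & Hc1).
    destruct (Hc1 eps Heps) as (eta & Heta & Hc2).
    assert (Hm : 0 < Rmin delta eta) by (apply Rmin_glb_lt; auto).
    assert (He : 0 < Rmin delta eta / (N + 1)) by (apply Rdiv_lt_0_compat; lra).
    destruct (exp_cont t _ He) as (d & Hd & Hed).
    exists d. split; auto. intros s Hs Hst.
    assert (Hps : vnorm (vsub (Psi (f x0) (f x) s) (f (gamma t))) < Rmin delta eta).
    { rewrite Hfc, Psi_st. apply small_mul; auto. }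
    pose proof (Rmin_l delta eta). pose proof (Rmin_r delta eta).
    destruct (Hg (Psi (f x0) (f x) s) ltac:(lra)) as (HC1 & _ & Hf1 & _).
    rewrite (Huniq s (g (Psi (f x0) (f x) s)) Hs HC1 Hf1).
    rewrite <- Hgc. apply Hc2; lra. }
  split; [apply HCD; auto|]. split.
  - intros t Ht. apply (Hmax x _ gamma (HCD x Hx) Hl t Ht).
  - intros eps Heps.
    destruct (local_inv C x0 HCo HC0 HD0) as (delta & g & r & Hdel & Hr & Hg0 & Hg & _).
    assert (H0 : vnorm (vsub (f x0) (f x0)) < delta) by (rewrite vnorm_sub_diag; auto).
    destruct (Hg _ H0) as (_ & _ & _ & Hc1).
    destruct (Hc1 eps Heps) as (eta & Heta & Hc2).
    assert (Hm : 0 < Rmin delta eta) by (apply Rmin_glb_lt; auto).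
    assert (He : 0 < Rmin delta eta / (N + 1)) by (apply Rdiv_lt_0_compat; lra).
    destruct (exp_small _ He) as (T & HT).
    exists (Rmax T 0). intros t Ht.
    pose proof (Rmax_l T 0). pose proof (Rmax_r T 0).
    destruct (Hmax x _ gamma (HCD x Hx) Hl t ltac:(lra)) as (_ & <-).
    assert (Hps : vnorm (vsub (Psi (f x0) (f x) t) (f x0)) < Rmin delta eta).
    { rewrite Psi_y0. pose proof (exp_pos (-t)).
      rewrite <- (Rabs_right (exp (-t))) by lra. apply small_mul; auto.
      rewrite Rabs_right by lra. apply HT; lra. }
    pose proof (Rmin_l delta eta). pose proof (Rmin_r delta eta).
    destruct (Hg (Psi (f x0) (f x) t) ltac:(lra)) as (HC1 & _ & Hf1 & _).
    rewrite (Huniq t (g (Psi (f x0) (f x) t)) ltac:(lra) HC1 Hf1).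
    rewrite <- Hg0 at 2. apply Hc2; lra.
Qed.

End Main.

Theorem proposition2p1 (X Y : Banach) (D : X -> Prop) (f : X -> Y) (x0 : X)
    (Dom : X -> R -> Prop) (Phi : X -> R -> X) :
  is_open D -> (exists x, D x) -> is_connected D -> local_homeo D f -> D x0 ->
  is_aux_flow D f (f x0) Dom Phi ->
  let A := attraction_basin D Dom Phi x0 in
  is_open A /\
  injective_on f A /\
  star_shaped (image f A) (f x0) /\
  (forall C : X -> Prop, is_open C -> is_connected C ->
     (forall x, C x -> D x) -> C x0 -> injective_on f C ->
     star_shaped (image f C) (f x0) ->
     forall x, C x -> A x).
Proof.
  intros HDo _ _ Hlh HD0 Haux A.
  split; [eapply A_open; eassumption|].
  split; [eapply A_inj; eassumption|].
  split; [eapply A_star; eassumption|].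
  intros C HCo _ HCD HC0 HCi HCs. eapply A_max; eassumption.
Qed.
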